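(* Let $0<\lambda<\frac{5-\sqrt{21}}{2}$ and let $K$ be the attractor of the IFS $f_1(x)=\lambda x$, $f_2(x)=\lambda x+2\lambda$, $f_3(x)=\lambda x+3\lambda-\lambda^2$, $f_4(x)=\lambda x+1-\lambda$. Then $$\dim_H(U_2)=\dim_H\big(U_1\cap(U_1+1-\lambda)\big)=\dim_H(U_1),$$ where $U_1+1-\lambda=\{x+1-\lambda:x\in U_1\}$. Moreover, $U_1\cap(U_1+1-\lambda)$ is exactly the set of points of $K$ having a unique coding and whose unique coding begins with the digit $4$.
   Context: A coding of $x\in K$ is a sequence $(i_n)\in\{1,2,3,4\}^{\mathbb{N}}$ with $x=\lim_{n\to\infty}f_{i_1}\circ\cdots\circ f_{i_n}(0)$. $U_k$ denotes the set of $x\in K$ having exactly $k$ distinct codings. *)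

(* Defs.v *)
From Stdlib Require Import Reals Lra List.
Open Scope R_scope.

Definition ifs (lam : R) (i : nat) (x : R) : R :=
  match i with
  | 1%nat => lam * x
  | 2%nat => lam * x + 2 * lam
  | 3%nat => lam * x + 3 * lam - lam ^ 2
  | _ => lam * x + 1 - lam
  end.

Fixpoint comp (lam : R) (c : nat -> nat) (n : nat) (y : R) : R :=
  match n with
  | O => y
  | S m => ifs lam (c O) (comp lam (fun k => c (S k)) m y)
  end.

Definition is_digit_seq (c : nat -> nat) : Prop :=
  forall n, (1 <= c n <= 4)%nat.

Definition is_coding (lam : R) (c : nat -> nat) (x : R) : Prop :=
  is_digit_seq c /\ Un_cv (fun n => comp lam c n 0) x.

(* The attractor K = set of points possessing a coding *)
Definition K (lam : R) (x : R) : Prop := exists c, is_coding lam c x.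

Definition seq_eq (c d : nat -> nat) : Prop := forall n, c n = d n.

(* x has exactly k distinct codings *)
Definition U (lam : R) (k : nat) (x : R) : Prop :=
  K lam x /\
  exists l : list (nat -> nat),
    length l = k /\
    (forall c, In c l -> is_coding lam c x) /\
    (forall i j, (i < j < k)%nat ->
       ~ seq_eq (nth i l (fun _ => O)) (nth j l (fun _ => O))) /\
    (forall c, is_coding lam c x -> exists d, In d l /\ seq_eq c d).

(* H^s(E) = 0, unfolded: for every eps, delta > 0 there is a countable cover of E
   by sets U_n of diameter <= r_n, 0 < r_n <= delta, with sum r_n^s <= eps. *)
Definition H_null (s : R) (E : R -> Prop) : Prop :=
  forall eps delta, 0 < eps -> 0 < delta ->
    exists (V : nat -> R -> Prop) (r : nat -> R),
      (forall n, 0 < r n <= delta) /\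
      (forall n x y, V n x -> V n y -> Rabs (x - y) <= r n) /\
      (forall x, E x -> exists n, V n x) /\
      (forall N, sum_f_R0 (fun n => Rpower (r n) s) N <= eps).

Definition is_lower_bound (A : R -> Prop) (m : R) : Prop :=
  forall s, A s -> m <= s.
Definition is_glb (A : R -> Prop) (m : R) : Prop :=
  is_lower_bound A m /\ (forall b, is_lower_bound A b -> b <= m).

Definition hausdorff_dim (E : R -> Prop) (d : R) : Prop :=
  is_glb (fun s => 0 <= s /\ H_null s E) d.

(* Main.v *)
Require Import Defs.
From Stdlib Require Import Reals.
Open Scope R_scope.
From Stdlib Require Import Lra Lia Psatz List Classical IndefiniteDescription.
Require Import Defs.
Open Scope R_scope.


Lemma Rpower_pos' x s : 0 < Rpower x s. Proof. unfold Rpower; apply exp_pos. Qed.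

Lemma Hmono s (E F : R -> Prop) : (forall x, E x -> F x) -> H_null s F -> H_null s E.
Proof.
intros HEF HF eps delta He Hd. destruct (HF eps delta He Hd) as (V & r & H1 & H2 & H3 & H4).
exists V, r. refine (conj H1 (conj H2 (conj _ H4))). intros x Hx; apply H3, HEF, Hx.
Qed.

Lemma Hsim s a b (E : R -> Prop) : 0 < a -> H_null s E ->
  H_null s (fun x => exists y, E y /\ x = a*y + b).
Proof.
intros Ha HE eps delta He Hd.
set (C := Rpower a s). assert (HC: 0 < C) by apply Rpower_pos'.
destruct (HE (eps / C) (delta / a)) as (V & r & H1 & H2 & H3 & H4).
 apply Rdiv_lt_0_compat; auto. apply Rdiv_lt_0_compat; auto.
exists (fun n x => exists y, V n y /\ x = a*y+b), (fun n => a * r n).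
split; [|split; [|split]].
- intro n. destruct (H1 n) as [h1 h2]. split. apply Rmult_lt_0_compat; auto.
  apply (Rmult_le_compat_l a) in h2; [|lra]. replace (a*(delta/a)) with delta in h2 by (field; lra). exact h2.
- intros n x y [x' [Vx ->]] [y' [Vy ->]]. replace (a*x'+b-(a*y'+b)) with (a*(x'-y')) by ring.
  rewrite Rabs_mult, (Rabs_right a) by lra. apply Rmult_le_compat_l; [lra| auto].
- intros x [y [Ey ->]]. destruct (H3 y Ey) as [n Vn]. exists n, y; auto.
- intro N. specialize (H4 N).
  assert (E1: sum_f_R0 (fun n => Rpower (a * r n) s) N = C * sum_f_R0 (fun n => Rpower (r n) s) N).
  { rewrite scal_sum. apply sum_eq. intros i _. unfold C. rewrite <- Rpower_mult_distr; [ring|lra|apply H1]. }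
  rewrite E1. apply (Rmult_le_compat_l C) in H4; [|lra]. replace (C*(eps/C)) with eps in H4 by (field; lra). exact H4.
Qed.

Fixpoint dec (f n : nat) : option (nat*nat) :=
  match f with O => None
  | S f' => if Nat.even n then Some (O, Nat.div2 n)
            else match dec f' (Nat.div2 n) with None => None | Some (k,m) => Some (S k, m) end
  end.

Fixpoint enc (k m : nat) : nat := match k with O => (2*m)%nat | S k' => S (2 * enc k' m) end.

Lemma even_S2 m : Nat.even (S (2*m)) = false.
Proof. rewrite <- Nat.add_1_r. apply Nat.even_odd. Qed.

Lemma dec_enc k m f : (enc k m < f)%nat -> dec f (enc k m) = Some (k,m).
Proof.
revert f. induction k; intros f Hf; destruct f as [|f]; try lia; cbn [enc] in *.
- cbn [dec]. rewrite Nat.even_even, Nat.div2_double. reflexivity.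
- cbn [dec]. rewrite even_S2, Nat.div2_succ_double, IHk by lia. reflexivity.
Qed.

Lemma dec_indep f f' n : (n < f)%nat -> (n < f')%nat -> dec f n = dec f' n.
Proof.
revert f' n. induction f; intros f' n H1 H2; [lia|]. destruct f' as [|f']; [lia|].
simpl. destruct (Nat.even n) eqn:E; auto.
destruct n as [|n]; [discriminate|].
assert (Nat.div2 (S n) < S n)%nat by (apply Nat.lt_div2; lia).
rewrite (IHf f') by lia. reflexivity.
Qed.

Lemma dec_some f n : (n < f)%nat -> exists p, dec f n = Some p.
Proof.
revert n. induction f; intros n H; [lia|]. simpl. destruct (Nat.even n) eqn:E; eauto.
destruct n as [|n]; [discriminate|].
assert (Nat.div2 (S n) < S n)%nat by (apply Nat.lt_div2; lia).
destruct (IHf (Nat.div2 (S n))) as [[k m] ->]; [lia|]. eauto.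
Qed.

Definition T (h : nat -> nat -> R) f k n :=
  match dec f n with Some (a,b) => h (k+a)%nat b | None => 0 end.

Lemma sum_mono F N M : (forall n, 0 <= F n) -> (N <= M)%nat -> sum_f_R0 F N <= sum_f_R0 F M.
Proof.
intros HF H. induction H; [lra|]. simpl. specialize (HF (S m)). lra.
Qed.

Lemma sum_eo F N : sum_f_R0 F (S (2*N)) =
  sum_f_R0 (fun m => F (2*m)%nat) N + sum_f_R0 (fun m => F (S (2*m))) N.
Proof.
induction N. simpl. ring.
replace (S (2 * S N)) with (S (S (S (2*N)))) by lia.
change (sum_f_R0 F (S (S (S (2*N))))) with (sum_f_R0 F (S (2*N)) + F (S (S (2*N))) + F (S (S (S (2*N))))).
rewrite IHN. change (sum_f_R0 (fun m => F (2*m)%nat) (S N)) with (sum_f_R0 (fun m => F (2*m)%nat) N + F (2 * S N)%nat).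
change (sum_f_R0 (fun m => F (S (2*m))) (S N)) with (sum_f_R0 (fun m => F (S(2*m))) N + F (S (2 * S N))).
replace (2 * S N)%nat with (S (S (2*N))) by lia. ring.
Qed.

Lemma T_nonneg h f k n : (forall a b, 0 <= h a b) -> 0 <= T h f k n.
Proof. intros; unfold T; destruct (dec f n) as [[a b]|]; auto; lra. Qed.

Lemma T_bound h eps : (forall a b, 0 <= h a b) -> 0 < eps ->
  (forall k M, sum_f_R0 (h k) M <= eps * (/2)^(S k)) ->
  forall f k N, sum_f_R0 (fun n => T h f k n) N <= eps * (/2)^k.
Proof.
intros Hh He HM f. induction f; intros k N.
- unfold T; simpl. rewrite sum_cte. assert (0 < (/2)^k) by (apply pow_lt; lra). nra.
- eapply Rle_trans. apply (sum_mono _ N (S (2*N))). intro; apply T_nonneg; auto. lia.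
  rewrite sum_eo.
  assert (E1: sum_f_R0 (fun m => T h (S f) k (2*m)) N = sum_f_R0 (h k) N).
  { apply sum_eq; intros i _. unfold T; cbn [dec]. rewrite Nat.even_even, Nat.div2_double.
    rewrite Nat.add_0_r; reflexivity. }
  assert (E2: sum_f_R0 (fun m => T h (S f) k (S (2*m))) N = sum_f_R0 (fun n => T h f (S k) n) N).
  { apply sum_eq; intros i _. unfold T; cbn [dec]. rewrite even_S2, Nat.div2_succ_double.
    destruct (dec f i) as [[a b]|]; auto. rewrite Nat.add_succ_r. reflexivity. }
  rewrite E1, E2. specialize (HM k N). specialize (IHf (S k) N).
  simpl pow in *. lra.
Qed.

Lemma Hunion s (E : nat -> R -> Prop) : (forall k, H_null s (E k)) -> H_null s (fun x => exists k, E k x).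
Proof.
intros HE eps delta He Hd.
assert (Hc: forall k, {p : (nat -> R -> Prop) * (nat -> R) | (forall n, 0 < snd p n <= delta) /\
   (forall n x y, fst p n x -> fst p n y -> Rabs (x-y) <= snd p n) /\
   (forall x, E k x -> exists n, fst p n x) /\
   (forall N, sum_f_R0 (fun n => Rpower (snd p n) s) N <= eps * (/2)^(S k))}).
{ intro k. apply constructive_indefinite_description.
  destruct (HE k (eps * (/2)^(S k)) delta) as (V & r & H).
  apply Rmult_lt_0_compat; auto; apply pow_lt; lra. auto.
  exists (V, r); exact H. }
set (VV k := fst (proj1_sig (Hc k))). set (rr k := snd (proj1_sig (Hc k))).
assert (HP: forall k, (forall n, 0 < rr k n <= delta) /\
   (forall n x y, VV k n x -> VV k n y -> Rabs (x-y) <= rr k n) /\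
   (forall x, E k x -> exists n, VV k n x) /\
   (forall N, sum_f_R0 (fun n => Rpower (rr k n) s) N <= eps * (/2)^(S k))).
{ intro k. exact (proj2_sig (Hc k)). }
clearbody VV rr.
exists (fun n x => match dec (S n) n with Some (k,m) => VV k m x | None => False end),
       (fun n => match dec (S n) n with Some (k,m) => rr k m | None => delta end).
split; [|split; [|split]].
- intro n. destruct (dec (S n) n) as [[k m]|]. apply (HP k). lra.
- intros n x y. destruct (dec (S n) n) as [[k m]|]. apply (HP k). tauto.
- intros x [k Hk]. destruct (proj1 (proj2 (proj2 (HP k))) x Hk) as [m Hm].
  exists (enc k m). rewrite dec_enc by lia. exact Hm.
- intro N. set (h k m := Rpower (rr k m) s).
  assert (E1: sum_f_R0 (fun n => Rpower match dec (S n) n with Some (k,m) => rr k m | None => delta end s) N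
     = sum_f_R0 (fun n => T h (S N) 0 n) N).
  { apply sum_eq. intros i Hi. unfold T. rewrite (dec_indep (S i) (S N) i) by lia.
    destruct (dec_some (S N) i) as [[k m] Hkm]; [lia|]. rewrite Hkm. reflexivity. }
  rewrite E1. replace eps with (eps * (/2)^0) by (simpl; ring).
  apply T_bound; auto. intros; apply Rlt_le, Rpower_pos'.
  intros k M. apply (HP k).
Qed.

Lemma Rpower2 y : 0 < y -> Rpower y 2 = y*y.
Proof. intros. replace 2 with (INR 2) by (simpl; ring). rewrite Rpower_pow by auto. simpl; ring. Qed.

Lemma geom_sum p N : sum_f_R0 (fun n => p^n) N * (1 - p) = 1 - p^(S N).
Proof. induction N; simpl; [ring| ]. rewrite Rmult_plus_distr_r, IHN. simpl; ring. Qed.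

Lemma pow_le1 q n : 0 <= q <= 1 -> q^n <= 1.
Proof. intros H; induction n; simpl; [lra|]. assert (0 <= q^n) by (apply pow_le; lra). nra. Qed.

Lemma H01 : H_null 2 (fun x => 0 <= x <= 1).
Proof.
intros eps delta He Hd.
set (t := Rmin (Rmin (delta/2) (eps/4)) (1/2)).
assert (Ht0: 0 < t). { unfold t; repeat apply Rmin_glb_lt; lra. }
assert (Ht1: t <= delta/2) by (unfold t; eapply Rle_trans; [apply Rmin_l|apply Rmin_l]).
assert (Ht2: t <= eps/4) by (unfold t; eapply Rle_trans; [apply Rmin_l|apply Rmin_r]).
assert (Ht3: t <= 1/2) by (unfold t; apply Rmin_r).
clearbody t. set (q := 1 - t). assert (Hq: 1/2 <= q < 1) by (unfold q; lra). assert (Hqt: q = 1 - t) by reflexivity. clearbody q.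
exists (fun n x => 2 - 2*q^n <= x <= 2 - 2*q^(S n)), (fun n => 2*t*q^n).
split; [|split; [|split]].
- intro n. assert (0 < q^n) by (apply pow_lt; lra). assert (q^n <= 1) by (apply pow_le1; lra). split; nra.
- intros n x y Hx Hy. simpl in *. apply Rabs_le. assert (0 < q^n) by (apply pow_lt; lra). subst q. split; nra.
- intros x Hx. destruct (pow_lt_1_zero q ltac:(rewrite Rabs_right; lra) (1/2) ltac:(lra)) as [N HN].
  specialize (HN (S N) ltac:(lia)). rewrite Rabs_right in HN by (apply Rle_ge, pow_le; lra).
  assert (Hg: forall n, x < 2 - 2*q^(S n) -> exists m, 2 - 2*q^m <= x <= 2 - 2*q^(S m)).
  { induction n; intro H.
    - exists O. simpl in *. lra.
    - destruct (Rlt_or_le x (2 - 2*q^(S n))). auto. exists (S n). lra. }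
  apply (Hg N). lra.
- intro N.
  assert (E1: sum_f_R0 (fun n => Rpower (2*t*q^n) 2) N = (4*t*t) * sum_f_R0 (fun n => (q*q)^n) N).
  { rewrite scal_sum. apply sum_eq; intros i _. rewrite Rpower2. rewrite Rpow_mult_distr. ring.
    assert (0 < q^i) by (apply pow_lt; lra). nra. }
  rewrite E1. pose proof (geom_sum (q*q) N) as G.
  assert (0 < (q*q)^(S N)) by (apply pow_lt; nra).
  set (SS := sum_f_R0 (fun n => (q*q)^n) N) in *. 
  assert (t <= 1 - q*q) by nra.
  assert ((q*q)^(S N) <= 1) by (apply pow_le1; nra). assert (0 < 1 - q*q) by nra.
  assert (0 <= SS). { destruct (Rle_or_lt 0 SS); auto. nra. }
  nra.
Qed.

Definition bb lam (i : nat) : R :=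
  match i with 1%nat => 0 | 2%nat => 2*lam | 3%nat => 3*lam - lam^2 | _ => 1 - lam end.

Lemma ifs_aff lam i y : ifs lam i y = lam*y + bb lam i.
Proof. destruct i as [|[|[|[|i]]]]; simpl; ring. Qed.

Definition shift (c : nat -> nat) := fun k => c (S k).
Definition dcons (i : nat) (d : nat -> nat) := fun k => match k with O => i | S k' => d k' end.

Lemma cv_ext u v l : (forall n, u n = v n) -> Un_cv u l -> Un_cv v l.
Proof. intros E H eps He. destruct (H eps He) as [N HN]. exists N. intros n Hn. rewrite <- E. auto. Qed.

Lemma cv_aff u l a b : Un_cv u l -> Un_cv (fun n => a * u n + b) (a*l+b).
Proof.
intros H eps He. destruct (H (eps / (Rabs a + 1))) as [N HN].
{ apply Rdiv_lt_0_compat; auto. pose proof (Rabs_pos a); lra. }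
exists N. intros n Hn. specialize (HN n Hn). unfold R_dist in *.
replace (a * u n + b - (a*l+b)) with (a * (u n - l)) by ring. rewrite Rabs_mult.
pose proof (Rabs_pos a). pose proof (Rabs_pos (u n - l)).
assert (Rabs a * Rabs (u n - l) <= Rabs a * (eps / (Rabs a + 1))) by (apply Rmult_le_compat_l; lra).
assert (Rabs a * (eps / (Rabs a + 1)) < eps).
{ apply (Rmult_lt_reg_r (Rabs a + 1)); [lra|]. field_simplify; lra. }
lra.
Qed.

Lemma cv_shift_back u l : Un_cv (fun n => u (S n)) l -> Un_cv u l.
Proof.
intros H eps He. destruct (H eps He) as [N HN]. exists (S N). intros n Hn.
destruct n as [|n]; [lia|]. apply HN; lia.
Qed.

Lemma cv_const c : Un_cv (fun _ => c) c.
Proof. intros eps He. exists O. intros. unfold R_dist. rewrite Rminus_diag, Rabs_R0. auto. Qed.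

Section L.
End L.

Definition good lam := 0 < lam /\ lam < /4 /\ 0 < lam*lam - 5*lam + 1.

Lemma ifs_range lam i y : good lam -> 0 <= y <= 1 -> 0 <= ifs lam i y <= 1.
Proof.
intros (h0 & h4 & hr) Hy. rewrite ifs_aff.
assert (0 <= lam*y <= lam) by nra.
destruct i as [|[|[|[|i]]]]; simpl; nra.
Qed.

Lemma comp_range lam c n : good lam -> 0 <= comp lam c n 0 <= 1.
Proof.
intros G. revert c. induction n; intro c; simpl. lra. apply ifs_range; auto.
Qed.

Lemma coding_range lam c x : good lam -> is_coding lam c x -> 0 <= x <= 1.
Proof.
intros G [_ H]. split.
- apply (@Rle_cv_lim (fun _ => 0) (fun n => comp lam c n 0) 0 x).
  intro n; apply comp_range; auto. apply cv_const. exact H.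
- apply (@Rle_cv_lim (fun n => comp lam c n 0) (fun _ => 1) x 1).
  intro n; apply comp_range; auto. exact H. apply cv_const.
Qed.

Lemma K_range lam x : good lam -> K lam x -> 0 <= x <= 1.
Proof. intros G [c Hc]. eapply coding_range; eauto. Qed.

Lemma coding_decomp lam c x : good lam -> is_coding lam c x ->
  exists y, 0 <= y <= 1 /\ x = ifs lam (c O) y /\ is_coding lam (shift c) y /\
    (c O = 1 \/ c O = 2 \/ c O = 3 \/ c O = 4)%nat.
Proof.
intros G Hc. pose proof G as (h0 & _).
assert (Hs: is_coding lam (shift c) ((x - bb lam (c O)) / lam)).
{ destruct Hc as [Hd Hcv]. split. intro n; apply Hd.
  apply (cv_ext (fun n => (/lam) * comp lam c (S n) 0 + (- bb lam (c O) / lam))).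
  - intro n. change (comp lam c (S n) 0) with (ifs lam (c O) (comp lam (shift c) n 0)).
    rewrite ifs_aff. field. lra.
  - replace ((x - bb lam (c O)) / lam) with ((/lam) * x + (- bb lam (c O) / lam)) by (field; lra).
    apply cv_aff. apply (cv_ext _ _ _ (fun n => eq_refl)) in Hcv.
    intros eps He. destruct (Hcv eps He) as [N HN]. exists N. intros n Hn. apply HN; lia. }
exists ((x - bb lam (c O)) / lam). split; [eapply coding_range; eauto|]. split; [|split; auto].
- rewrite ifs_aff. field. lra.
- destruct Hc as [Hd _]. specialize (Hd O). lia.
Qed.

Lemma coding_cons lam d y i : is_coding lam d y -> (1 <= i <= 4)%nat ->
  is_coding lam (dcons i d) (ifs lam i y).
Proof.
intros [Hd Hcv] Hi. split.
- intros [|n]; simpl; auto.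
- apply cv_shift_back. rewrite ifs_aff.
  apply (cv_ext (fun n => lam * comp lam d n 0 + bb lam i)).
  + intro n. change (comp lam (dcons i d) (S n) 0) with (ifs lam i (comp lam d n 0)). rewrite ifs_aff; reflexivity.
  + apply cv_aff; auto.
Qed.

Lemma ifs_inj lam i y y' : 0 < lam -> ifs lam i y = ifs lam i y' -> y = y'.
Proof. intros h H. rewrite !ifs_aff in H. nra. Qed.

Lemma coding_peel lam e y : good lam -> is_coding lam e (ifs lam (e O) y) -> is_coding lam (shift e) y.
Proof.
intros G H. destruct (coding_decomp lam e _ G H) as (y' & _ & E & Hy' & _).
apply ifs_inj in E; [|destruct G; lra]. subst; auto.
Qed.

Lemma fd4 lam c x : good lam -> is_coding lam c x -> 1 - lam <= x -> c O = 4%nat.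
Proof.
intros G Hc Hx. destruct (coding_decomp lam c x G Hc) as (y & Hy & E & _ & D).
pose proof G as (h0 & h4 & hr). assert (0 <= lam*y <= lam) by nra.
destruct D as [D|[D|[D|D]]]; rewrite D in E; auto; rewrite ifs_aff in E; simpl in E; nra.
Qed.

Lemma fd1 lam c x : good lam -> is_coding lam c x -> x <= lam -> c O = 1%nat.
Proof.
intros G Hc Hx. destruct (coding_decomp lam c x G Hc) as (y & Hy & E & _ & D).
pose proof G as (h0 & h4 & hr). assert (0 <= lam*y <= lam) by nra.
destruct D as [D|[D|[D|D]]]; rewrite D in E; auto; rewrite ifs_aff in E; simpl in E; nra.
Qed.

Lemma fd23 lam c d x : good lam -> is_coding lam c x -> is_coding lam d x -> c O <> d O ->
  (c O = 2 /\ d O = 3 \/ c O = 3 /\ d O = 2)%nat.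
Proof.
intros G Hc Hd Hne. destruct (coding_decomp lam c x G Hc) as (y & Hy & E & _ & D).
destruct (coding_decomp lam d x G Hd) as (y' & Hy' & E' & _ & D').
pose proof G as (h0 & h4 & hr). assert (0 <= lam*y <= lam) by nra. assert (0 <= lam*y' <= lam) by nra.
rewrite E in E'. rewrite !ifs_aff in E'.
destruct D as [D|[D|[D|D]]]; destruct D' as [D'|[D'|[D'|D']]]; rewrite D, D' in *; auto;
  try (exfalso; apply Hne; reflexivity); simpl in E'; exfalso; nra.
Qed.

Definition seq_eq_ := seq_eq.

Lemma U1_iff lam x : U lam 1 x <-> K lam x /\ forall c d, is_coding lam c x -> is_coding lam d x -> seq_eq c d.
Proof.
split.
- intros [HK (l & Hlen & Hin & Hdist & Hall)]. split; auto.
  destruct l as [|e [|e' l]]; simpl in Hlen; try discriminate.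
  intros c d Hc Hd. destruct (Hall c Hc) as (c' & [<-|[]] & Ec).
  destruct (Hall d Hd) as (d' & [<-|[]] & Ed). intro n. rewrite Ec, Ed. reflexivity.
- intros [HK Hu]. split; auto. destruct HK as [c Hc]. exists (c :: nil). split; [reflexivity|].
  split; [intros c' [<-|[]]; auto|]. split; [intros; lia|].
  intros d Hd. exists c. split; [left; auto|]. apply Hu; auto.
Qed.

Lemma U2_to lam x : U lam 2 x -> exists c d, is_coding lam c x /\ is_coding lam d x /\ ~ seq_eq c d /\
  forall e, is_coding lam e x -> seq_eq e c \/ seq_eq e d.
Proof.
intros [HK (l & Hlen & Hin & Hdist & Hall)].
destruct l as [|c [|d [|e l]]]; simpl in Hlen; try discriminate.
exists c, d. split; [apply Hin; simpl; auto|]. split; [apply Hin; simpl; auto|].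
split. apply (Hdist 0 1)%nat. lia.
intros e He. destruct (Hall e He) as (e' & [<-|[<-|[]]] & Ee); auto.
Qed.

Lemma U2_from lam x c d : is_coding lam c x -> is_coding lam d x -> ~ seq_eq c d ->
  (forall e, is_coding lam e x -> seq_eq e c \/ seq_eq e d) -> U lam 2 x.
Proof.
intros Hc Hd Hne Hall. split. exists c; auto.
exists (c :: d :: nil). split; [reflexivity|]. split. intros e [<-|[<-|[]]]; auto.
split. intros i j Hij. assert (i = 0 /\ j = 1)%nat as [-> ->] by lia. simpl. auto.
intros e He. destruct (Hall e He); [exists c|exists d]; simpl; auto.
Qed.

Lemma seq_eq_tr c d e : seq_eq c d -> seq_eq e d -> seq_eq c e.
Proof. intros H1 H2 n. rewrite H1, H2; reflexivity. Qed.

Lemma digit_of lam c x : is_coding lam c x -> (1 <= c O <= 4)%nat.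
Proof. intros [H _]; apply H. Qed.

Lemma U1_img lam i y : good lam -> (i = 1 \/ i = 4)%nat -> U lam 1 y -> U lam 1 (ifs lam i y).
Proof.
intros G Hi Hy. apply U1_iff in Hy as [[g Hg] Hu]. apply U1_iff. split.
- exists (dcons i g). apply coding_cons; auto; lia.
- assert (Hr: 0 <= y <= 1) by (eapply coding_range; eauto).
  pose proof G as (h0 & h4 & hr).
  assert (Hf: forall d, is_coding lam d (ifs lam i y) -> d O = i /\ is_coding lam (shift d) y).
  { intros d Hd. assert (d O = i).
    { destruct Hi as [->| ->].
      - apply (fd1 lam d _ G Hd). rewrite ifs_aff; simpl; nra.
      - apply (fd4 lam d _ G Hd). rewrite ifs_aff; simpl; nra. }
    split; auto. apply coding_peel; auto. rewrite H; auto. }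
  intros c d Hc Hd. destruct (Hf c Hc) as [c0 Hc']. destruct (Hf d Hd) as [d0 Hd'].
  intros [|n]. congruence. apply (Hu _ _ Hc' Hd').
Qed.

Lemma U1_inv lam i y : good lam -> (1 <= i <= 4)%nat -> K lam y -> U lam 1 (ifs lam i y) -> U lam 1 y.
Proof.
intros G Hi HK H. apply U1_iff in H as [_ Hu]. apply U1_iff. split; auto.
intros c d Hc Hd. pose proof (Hu _ _ (coding_cons _ _ _ _ Hc Hi) (coding_cons _ _ _ _ Hd Hi)) as E.
intro n. exact (E (S n)).
Qed.

Lemma L1 lam z : good lam -> U lam 1 z -> U lam 2 (ifs lam 2 (ifs lam 4 z)).
Proof.
intros G Hz. apply U1_iff in Hz as [[g Hg] Hu].
assert (Hr: 0 <= z <= 1) by (eapply coding_range; eauto).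
pose proof G as (h0 & h4 & hr). assert (0 <= lam*z <= lam) by nra.
assert (Eq: ifs lam 2 (ifs lam 4 z) = ifs lam 3 (ifs lam 1 z)) by (simpl; ring).
apply (U2_from _ _ (dcons 2 (dcons 4 g)) (dcons 3 (dcons 1 g))).
- apply coding_cons; [apply coding_cons|]; auto; lia.
- rewrite Eq. apply coding_cons; [apply coding_cons|]; auto; lia.
- intro Hq. specialize (Hq O). discriminate.
- intros e He. destruct (coding_decomp lam e _ G He) as (y & Hy & E & _ & D).
  assert (0 <= lam*y <= lam) by nra.
  destruct D as [D|[D|[D|D]]]; rewrite D in E; rewrite !ifs_aff in E; simpl in E.
  + exfalso; nra.
  + left. assert (He1: is_coding lam (shift e) (ifs lam 4 z)).
    { apply coding_peel; auto. rewrite D. exact He. }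
    assert (D1: shift e O = 4%nat). { apply (fd4 lam _ _ G He1). rewrite ifs_aff; simpl; nra. }
    assert (He2: is_coding lam (shift (shift e)) z). { apply coding_peel; auto. rewrite D1; exact He1. }
    intros [|[|n]]; simpl; auto. apply (Hu _ _ He2 Hg).
  + right. rewrite Eq in He. assert (He1: is_coding lam (shift e) (ifs lam 1 z)).
    { apply coding_peel; auto. rewrite D. exact He. }
    assert (D1: shift e O = 1%nat). { apply (fd1 lam _ _ G He1). rewrite ifs_aff; simpl; nra. }
    assert (He2: is_coding lam (shift (shift e)) z). { apply coding_peel; auto. rewrite D1; exact He1. }
    intros [|[|n]]; simpl; auto. apply (Hu _ _ He2 Hg).
  + exfalso; nra.
Qed.

Definition Y lam n x := exists (w : nat -> nat) z, U lam 1 z /\ x = comp lam w n (ifs lam 2 (ifs lam 4 z)).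

Lemma L2_base lam x c d : good lam -> is_coding lam c x -> is_coding lam d x -> c O = 2%nat -> d O = 3%nat ->
  (forall e, is_coding lam e x -> seq_eq e c \/ seq_eq e d) -> Y lam 0 x.
Proof.
intros G Hc Hd c0 d0 Hall. pose proof G as (h0 & h4 & hr).
destruct (coding_decomp lam c x G Hc) as (y & Hy & E & Hsc & _).
destruct (coding_decomp lam d x G Hd) as (y' & Hy' & E' & _ & _).
rewrite c0 in E. rewrite d0 in E'. rewrite E in E'. rewrite !ifs_aff in E'. simpl in E'.
assert (1 - lam <= y) by nra.
assert (c1: shift c O = 4%nat) by (apply (fd4 lam _ _ G Hsc); auto).
destruct (coding_decomp lam (shift c) y G Hsc) as (z & Hz & Ez & Hsz & _).
rewrite c1 in Ez.
exists (fun _ => O), z. split; [|simpl; rewrite E, Ez; reflexivity].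
apply U1_iff. split. exists (shift (shift c)); auto.
assert (Hk: forall g, is_coding lam g z -> seq_eq g (shift (shift c))).
{ intros g Hg. assert (Hx: is_coding lam (dcons 2 (dcons 4 g)) x).
  { rewrite E, Ez. apply coding_cons; [apply coding_cons|]; auto; lia. }
  destruct (Hall _ Hx) as [Hq|Hq].
  - intro n. exact (Hq (S (S n))).
  - exfalso. specialize (Hq O). simpl in Hq. congruence. }
intros g h Hg Hh. apply (seq_eq_tr _ (shift (shift c))); auto.
Qed.

Lemma L2_step lam : good lam -> forall n x c d, is_coding lam c x -> is_coding lam d x -> c n <> d n ->
  (forall e, is_coding lam e x -> seq_eq e c \/ seq_eq e d) -> exists m, Y lam m x.
Proof.
intros G n. induction n; intros x c d Hc Hd Hn Hall.
- exists O. destruct (fd23 lam c d x G Hc Hd Hn) as [[c0 d0]|[c0 d0]].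
  + apply (L2_base lam x c d); auto.
  + apply (L2_base lam x d c); auto. intros e He; destruct (Hall e He); auto.
- destruct (Nat.eq_dec (c O) (d O)) as [E0|E0].
  + destruct (coding_decomp lam c x G Hc) as (y & Hy & E & Hsc & _).
    assert (Hsd: is_coding lam (shift d) y). { apply coding_peel; auto. rewrite <- E0, <- E. exact Hd. }
    destruct (IHn y (shift c) (shift d) Hsc Hsd Hn) as [m (w & z & Hz & Ew)].
    { intros e He. assert (Hx: is_coding lam (dcons (c O) e) x).
      { rewrite E. apply coding_cons; auto. eapply digit_of; eauto. }
      destruct (Hall _ Hx) as [H|H]; [left|right]; intro k; exact (H (S k)). }
    exists (S m), (dcons (c O) w), z. split; auto. rewrite E, Ew. reflexivity.
  + exists O. destruct (fd23 lam c d x G Hc Hd E0) as [[c0 d0]|[c0 d0]].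
    * apply (L2_base lam x c d); auto.
    * apply (L2_base lam x d c); auto. intros e He; destruct (Hall e He); auto.
Qed.

Lemma U2_Y lam x : good lam -> U lam 2 x -> exists m, Y lam m x.
Proof.
intros G H. destruct (U2_to lam x H) as (c & d & Hc & Hd & Hne & Hall).
apply not_all_ex_not in Hne as [n Hn]. apply (L2_step lam G n x c d); auto.
Qed.

Lemma Y_null lam s : good lam -> H_null s (U lam 1) -> forall n, H_null s (Y lam n).
Proof.
intros G H n. pose proof G as (h0 & h4 & hr). induction n.
- eapply Hmono; [|apply (Hsim s (lam*lam) (3*lam - lam*lam)); [nra|exact H]].
  intros x (w & z & Hz & Ex). exists z. split; auto. rewrite Ex. simpl. ring.
- eapply Hmono; [|apply (Hunion s (fun k x => exists y, Y lam n y /\ x = lam*y + bb lam k))].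
  + intros x (w & z & Hz & Ex). exists (w O), (comp lam (shift w) n (ifs lam 2 (ifs lam 4 z))).
    split. exists (shift w), z; auto. rewrite Ex. rewrite <- ifs_aff. reflexivity.
  + intro k. apply Hsim; auto.
Qed.

Lemma part2 lam x : good lam ->
     (U lam 1 x /\ U lam 1 (x - (1 - lam))) <->
     (U lam 1 x /\ forall c, is_coding lam c x -> c O = 4%nat).
Proof.
intros G. pose proof G as (h0 & h4 & hr). split.
- intros [H1 H2]. split; auto. intros c Hc. apply (fd4 lam c x G Hc).
  assert (0 <= x - (1-lam)) by (apply (K_range lam _ G), H2). lra.
- intros [H1 H4]. split; auto. destruct (proj1 H1) as [c Hc].
  destruct (coding_decomp lam c x G Hc) as (y & Hy & E & Hsc & _). rewrite (H4 c Hc) in E.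
  assert (HU: U lam 1 y). { apply (U1_inv lam 4); auto. exists (shift c); auto. rewrite <- E; auto. }
  replace (x - (1 - lam)) with (ifs lam 1 y) by (rewrite E; simpl; ring).
  apply U1_img; auto.
Qed.

Lemma U1_range lam x : good lam -> U lam 1 x -> 0 <= x <= 1.
Proof. intros G H. apply (K_range lam x G), H. Qed.

Lemma glb_exists (P : R -> Prop) : (exists s, P s) -> (forall s, P s -> 0 <= s) -> exists m, is_glb P m.
Proof.
intros [s0 Hs0] Hpos.
destruct (completeness (fun x => P (-x))) as [m [Hub Hlub]].
- exists 0. intros x Hx. specialize (Hpos _ Hx). lra.
- exists (-s0). rewrite Ropp_involutive; auto.
- exists (-m). split.
  + intros s Hs. assert (-s <= m) by (apply Hub; rewrite Ropp_involutive; auto). lra.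
  + intros b Hb. assert (m <= -b). { apply Hlub. intros x Hx. specialize (Hb _ Hx). lra. } lra.
Qed.

Lemma glb_ext (P Q : R -> Prop) m : (forall s, P s <-> Q s) -> is_glb P m -> is_glb Q m.
Proof.
intros E [H1 H2]. split.
- intros s Hs. apply H1, E, Hs.
- intros b Hb. apply H2. intros s Hs. apply Hb, E, Hs.
Qed.

Theorem lemma2p26 (lam : R) (hlam0 : 0 < lam) (hlam1 : lam < (5 - sqrt 21) / 2) :
  (exists d : R,
     hausdorff_dim (U lam 2) d /\
     hausdorff_dim (fun x => U lam 1 x /\ U lam 1 (x - (1 - lam))) d /\
     hausdorff_dim (U lam 1) d) /\
  (forall x : R,
     (U lam 1 x /\ U lam 1 (x - (1 - lam))) <->
     (U lam 1 x /\ forall c, is_coding lam c x -> c O = 4%nat)).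
Proof.
assert (Hs := sqrt_sqrt 21 ltac:(lra)). assert (Hs0 := sqrt_pos 21).
assert (G: good lam).
{ split; auto. split. nra. nra. }
pose proof G as (h0 & h4 & hr).
split; [|intro x; apply part2; auto].
destruct (glb_exists (fun s => 0 <= s /\ H_null s (U lam 1))) as [d Hd].
- exists 2. split; [lra|]. eapply Hmono; [|apply H01]. intros x Hx. apply (U1_range lam); auto.
- intros s [? _]; auto.
- exists d. split; [|split]; [| |exact Hd]; eapply glb_ext; try exact Hd; intro s;
    (split; intros [hs H]; split; auto).
  + eapply Hmono; [|apply (Hunion s (Y lam))]. intros x Hx. apply U2_Y; auto.
    apply Y_null; auto.
  + eapply Hmono; [|apply (Hsim s (/(lam*lam)) (- (3*lam - lam*lam)/(lam*lam))); [|exact H]].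
    intros x Hx. exists (ifs lam 2 (ifs lam 4 x)). split. apply L1; auto. simpl. field. lra.
    apply Rinv_0_lt_compat; nra.
  + eapply Hmono; [|apply (Hsim s 1 (1 - lam)); [lra|exact H]].
    intros x [_ Hx]. exists (x - (1 - lam)). split; auto. ring.
  + eapply Hmono; [|apply (Hsim s (/lam) (-(1-lam)/lam)); [|exact H]].
    intros x Hx. exists (ifs lam 4 x). split.
    * split. apply U1_img; auto. replace (ifs lam 4 x - (1 - lam)) with (ifs lam 1 x) by (simpl; ring).
      apply U1_img; auto.
    * simpl. field. lra.
    * apply Rinv_0_lt_compat; lra.
Qed.
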